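(* Let $\gamma\ge7/5$ and consider the SIEMS5 method ($\mathrm{k}=5$) with coefficients defined as in the context. Then $\sigma_{\mathrm{F}}=1$, $$\sigma_{\mathrm{E}}=\frac{15(16\gamma^4+32\gamma^3-24\gamma^2+8\gamma-1)}{16(15\gamma^4-15\gamma^2+10\gamma-2)},\quad\lambda_{\mathrm{I}}=\frac{15(2\gamma-1)^4}{16(15\gamma^4-15\gamma^2+10\gamma-2)},$$ so that $\mathfrak{I}_{\mathrm{IE}}=\dfrac{(2\gamma-1)^4}{16\gamma^4+32\gamma^3-24\gamma^2+8\gamma-1}$.
   Context: The $\gamma$-parameterized SIEMS-$\mathrm{k}$ method has coefficients $a_j$ ($0\le j\le\mathrm{k}-1$), $b_j$ ($0\le j\le\mathrm{k}$), $c_j$ ($0\le j\le\mathrm{k}-1$) determined by the polynomial identities (in $\zeta$) $\sum_{j=0}^{\mathrm{k}-1}a_j\zeta^{\mathrm{k}-j-1}=\sum_{j=1}^{\mathrm{k}}\frac{f^{(j)}(1)}{j!}(\zeta-1)^{j-1}$ with $f(z)=(\gamma z-\gamma+1)^{\mathrm{k}-1}z\ln z$; $\sum_{j=0}^{\mathrm{k}}b_j\zeta^{\mathrm{k}-j}=\zeta(\gamma\zeta-\gamma+1)^{\mathrm{k}-1}$; $\sum_{j=0}^{\mathrm{k}-1}c_j\zeta^{\mathrm{k}-j-1}=\zeta(\gamma\zeta-\gamma+1)^{\mathrm{k}-1}-\gamma^{\mathrm{k}-1}(\zeta-1)^{\mathrm{k}}$. (For $\mathrm{k}=5$: $(a_0,\dots,a_4)=(\gamma^4+2\gamma^3-\gamma^2+\tfrac{\gamma}{3}-\tfrac1{20},\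 -4\gamma^4-4\gamma^3+7\gamma^2-2\gamma+\tfrac{17}{60},\ 6\gamma^4-9\gamma^2+6\gamma-\tfrac{43}{60},\ -4\gamma^4+4\gamma^3+\gamma^2-\tfrac{10\gamma}{3}+\tfrac{77}{60},\ \gamma^4-2\gamma^3+2\gamma^2-\gamma+\tfrac15)$.) Define $a(\theta)=\sum_j a_je^{\imath j\theta}$, $b(\theta)=\sum_j b_je^{\imath j\theta}$, $c(\theta)=\sum_jc_je^{\imath j\theta}$, $\sigma_{\mathrm{F}}=\max_{\theta\in[0,2\pi)}|1/a(\theta)|$, $\sigma_{\mathrm{E}}=\max_{\theta\in[0,2\pi)}|c(\theta)/a(\theta)|$, $\lambda_{\mathrm{I}}=\min_{\theta\in[0,2\pi)}\Re[b(\theta)/a(\theta)]$, $\mathfrak{I}_{\mathrm{IE}}=\lambda_{\mathrm{I}}/\sigma_{\mathrm{E}}$. *)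

(* Defs.v *)
From Stdlib Require Import Reals.
From Coquelicot Require Import Coquelicot.
From mathcomp Require Import all_boot all_algebra.
From mathcomp Require Import Rstruct.

Set Implicit Arguments. Unset Strict Implicit. Unset Printing Implicit Defensive.

Definition siems_a (g : R) (j : nat) : R :=
  match j with
  | 0%nat => (g^4 + 2*g^3 - g^2 + g/3 - 1/20)%R
  | 1%nat => (-4*g^4 - 4*g^3 + 7*g^2 - 2*g + 17/60)%R
  | 2%nat => (6*g^4 - 9*g^2 + 6*g - 43/60)%R
  | 3%nat => (-4*g^4 + 4*g^3 + g^2 - 10*g/3 + 77/60)%R
  | 4%nat => (g^4 - 2*g^3 + 2*g^2 - g + 1/5)%R
  | _ => 0%R
  end.

Local Open Scope ring_scope.
Definition siems_bpoly (g : R) : {poly R} :=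
  'X * (g *: 'X - (g - 1)%:P) ^+ 4.
Definition siems_cpoly (g : R) : {poly R} :=
  siems_bpoly g - (g ^+ 4) *: ('X - 1) ^+ 5.
Definition siems_b (g : R) (j : nat) : R := (siems_bpoly g)`_(5 - j).
Definition siems_c (g : R) (j : nat) : R := (siems_cpoly g)`_(4 - j).
Local Close Scope ring_scope.

Open Scope R_scope.

Definition expi (t : R) : C := (cos t, sin t).

Definition a_fun (g t : R) : C :=
  sum_n (fun j => RtoC (siems_a g j) * expi (INR j * t))%C 4.
Definition b_fun (g t : R) : C :=
  sum_n (fun j => RtoC (siems_b g j) * expi (INR j * t))%C 5.
Definition c_fun (g t : R) : C :=
  sum_n (fun j => RtoC (siems_c g j) * expi (INR j * t))%C 4.

Definition is_max_on_circle (f : R -> R) (M : R) : Prop :=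
  (exists t, 0 <= t < 2 * PI /\ f t = M) /\
  (forall t, 0 <= t < 2 * PI -> f t <= M).
Definition is_min_on_circle (f : R -> R) (m : R) : Prop :=
  (exists t, 0 <= t < 2 * PI /\ f t = m) /\
  (forall t, 0 <= t < 2 * PI -> m <= f t).

(* Main.v *)
Require Import Defs.
From Stdlib Require Import Reals Lra.
From Coquelicot Require Import Coquelicot.
From mathcomp Require Import all_boot all_algebra.
From mathcomp Require Import Rstruct.
From mathcomp Require Import ring.

Open Scope R_scope.
Definition aS (g : R) (j : nat) : R :=
  match j with 0%nat => (0 - (1/20) + (1/3)*g - g^2 + 2*g^3 + g^4) | 1%nat => ((17/60) - 2*g + 7*g^2 - 4*g^3 - 4*g^4) | 2%nat => (0 - (43/60) + 6*g - 9*g^2 + 6*g^4) | 3%nat => ((77/60) - (10/3)*g + g^2 + 4*g^3 - 4*g^4) | 4%nat => ((1/5) - g + 2*g^2 - 2*g^3 + g^4) | _ => 0 end.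
Definition bS (g : R) (j : nat) : R :=
  match j with 0%nat => (g^4) | 1%nat => (4*g^3 - 4*g^4) | 2%nat => (6*g^2 - 12*g^3 + 6*g^4) | 3%nat => (4*g - 12*g^2 + 12*g^3 - 4*g^4) | 4%nat => (1 - 4*g + 6*g^2 - 4*g^3 + g^4) | 5%nat => (0) | _ => 0 end.
Definition cS (g : R) (j : nat) : R :=
  match j with 0%nat => (4*g^3 + g^4) | 1%nat => (6*g^2 - 12*g^3 - 4*g^4) | 2%nat => (4*g - 12*g^2 + 12*g^3 + 6*g^4) | 3%nat => (1 - 4*g + 6*g^2 - 4*g^3 - 4*g^4) | 4%nat => (g^4) | _ => g^4 end.

Section MC.
Import GRing.Theory.
Local Open Scope ring_scope.
Lemma bpolyE (g : R) : siems_bpoly g = (1 - 4%:R*g + 6%:R*g^+2 - 4%:R*g^+3 + g^+4)%:P * 'X + (4%:R*g - 12%:R*g^+2 + 12%:R*g^+3 - 4%:R*g^+4)%:P * 'X^2 + (6%:R*g^+2 - 12%:R*g^+3 + 6%:R*g^+4)%:P * 'X^3 + (4%:R*g^+3 - 4%:R*g^+4)%:P * 'X^4 + (g^+4)%:P * 'X^5.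
Proof. rewrite /siems_bpoly -mul_polyC. ring. Qed.
Lemma cpolyE (g : R) : siems_cpoly g = (g^+4)%:P + (1 - 4%:R*g + 6%:R*g^+2 - 4%:R*g^+3 - 4%:R*g^+4)%:P * 'X + (4%:R*g - 12%:R*g^+2 + 12%:R*g^+3 + 6%:R*g^+4)%:P * 'X^2 + (6%:R*g^+2 - 12%:R*g^+3 - 4%:R*g^+4)%:P * 'X^3 + (4%:R*g^+3 + g^+4)%:P * 'X^4.
Proof. rewrite /siems_cpoly /siems_bpoly -!mul_polyC. ring. Qed.
Lemma aE (g : R) (j : nat) : siems_a g j = aS g j.
Proof.
case: j => [|[|[|[|[|j]]]]]; rewrite /siems_a /aS ?RealsE /=; by field.
Qed.
Lemma bE (g : R) (j : nat) : siems_b g j = bS g j.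
Proof.
case: j => [|[|[|[|[|[|j]]]]]];
  rewrite /siems_b bpolyE !coefD !coefCM !coefXn ?coefX /= /bS !RealsE /=; ring.
Qed.
Lemma cE (g : R) (j : nat) : siems_c g j = cS g j.
Proof.
case: j => [|[|[|[|[|j]]]]];
  rewrite /siems_c cpolyE !coefD !coefCM !coefXn ?coefX ?coefC /= /cS !RealsE /=; ring.
Qed.
End MC.

Import Stdlib.setoid_ring.Ring_tac Stdlib.setoid_ring.Field_tac Stdlib.micromega.Lra.
Import Stdlib.setoid_ring.Ring Stdlib.setoid_ring.Field.
Open Scope R_scope.

Lemma cosS n t : cos (INR (S n) * t) = cos (INR n * t) * cos t - sin (INR n * t) * sin t.
Proof. rewrite S_INR Rmult_plus_distr_r Rmult_1_l. apply cos_plus. Qed.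
Lemma sinS n t : sin (INR (S n) * t) = sin (INR n * t) * cos t + cos (INR n * t) * sin t.
Proof. rewrite S_INR Rmult_plus_distr_r Rmult_1_l. apply sin_plus. Qed.

Lemma sin2' t : sin t ^ 2 = 1 - cos t ^ 2.
Proof. pose proof (sin2_cos2 t) as H0. unfold Rsqr in H0. lra. Qed.

Definition Tch (n : nat) (c : R) : R :=
  match n with 0%nat => 1 | 1%nat => c | 2%nat => 2*c^2-1 | 3%nat => 4*c^3-3*c | 4%nat => 8*c^4-8*c^2+1
  | 5%nat => 16*c^5-20*c^3+5*c | _ => 0 end.
Definition Uch (n : nat) (c : R) : R :=
  match n with 0%nat => 0 | 1%nat => 1 | 2%nat => 2*c | 3%nat => 4*c^2-1 | 4%nat => 8*c^3-4*c
  | 5%nat => 16*c^4-12*c^2+1 | _ => 0 end.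

Lemma trig_all t :
  let c := cos t in let s := sin t in
  (cos (INR 0 * t) = Tch 0 c /\ sin (INR 0 * t) = s * Uch 0 c) /\
  (cos (INR 1 * t) = Tch 1 c /\ sin (INR 1 * t) = s * Uch 1 c) /\
  (cos (INR 2 * t) = Tch 2 c /\ sin (INR 2 * t) = s * Uch 2 c) /\
  (cos (INR 3 * t) = Tch 3 c /\ sin (INR 3 * t) = s * Uch 3 c) /\
  (cos (INR 4 * t) = Tch 4 c /\ sin (INR 4 * t) = s * Uch 4 c) /\
  (cos (INR 5 * t) = Tch 5 c /\ sin (INR 5 * t) = s * Uch 5 c).
Proof.
  intros c s.
  assert (Hsc : s^2 = 1 - c^2) by apply sin2'.
  assert (H0 : cos (INR 0 * t) = 1 /\ sin (INR 0 * t) = s * 0).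
  { simpl INR. rewrite Rmult_0_l cos_0 sin_0. split; ring. }
  assert (H1 : cos (INR 1 * t) = c /\ sin (INR 1 * t) = s * (1)).
  { destruct H0 as [Hc Hs]. rewrite (cosS 0) (sinS 0) Hc Hs. fold c s.
    assert (HU : s^2 * (0) = (1 - c^2) * (0)) by (rewrite Hsc; ring).
    split; lra. }
  assert (H2 : cos (INR 2 * t) = 2*c^2-1 /\ sin (INR 2 * t) = s * (2*c)).
  { destruct H1 as [Hc Hs]. rewrite (cosS 1) (sinS 1) Hc Hs. fold c s.
    assert (HU : s^2 * (1) = (1 - c^2) * (1)) by (rewrite Hsc; ring).
    split; lra. }
  assert (H3 : cos (INR 3 * t) = 4*c^3-3*c /\ sin (INR 3 * t) = s * (4*c^2-1)).
  { destruct H2 as [Hc Hs]. rewrite (cosS 2) (sinS 2) Hc Hs. fold c s.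
    assert (HU : s^2 * (2*c) = (1 - c^2) * (2*c)) by (rewrite Hsc; ring).
    split; lra. }
  assert (H4 : cos (INR 4 * t) = 8*c^4-8*c^2+1 /\ sin (INR 4 * t) = s * (8*c^3-4*c)).
  { destruct H3 as [Hc Hs]. rewrite (cosS 3) (sinS 3) Hc Hs. fold c s.
    assert (HU : s^2 * (4*c^2-1) = (1 - c^2) * (4*c^2-1)) by (rewrite Hsc; ring).
    split; lra. }
  assert (H5 : cos (INR 5 * t) = 16*c^5-20*c^3+5*c /\ sin (INR 5 * t) = s * (16*c^4-12*c^2+1)).
  { destruct H4 as [Hc Hs]. rewrite (cosS 4) (sinS 4) Hc Hs. fold c s.
    assert (HU : s^2 * (8*c^3-4*c) = (1 - c^2) * (8*c^3-4*c)) by (rewrite Hsc; ring).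
    split; lra. }
  unfold Tch, Uch. tauto.
Qed.

Lemma sum4 (f : nat -> R) t :
  sum_n (fun j => (RtoC (f j) * expi (INR j * t))%C) 4 =
  (f 0%nat * Tch 0 (cos t) + f 1%nat * Tch 1 (cos t) + f 2%nat * Tch 2 (cos t)
     + f 3%nat * Tch 3 (cos t) + f 4%nat * Tch 4 (cos t),
   sin t * (f 0%nat * Uch 0 (cos t) + f 1%nat * Uch 1 (cos t) + f 2%nat * Uch 2 (cos t)
     + f 3%nat * Uch 3 (cos t) + f 4%nat * Uch 4 (cos t))).
Proof.
  destruct (trig_all t) as [[c0 s0] [[c1 s1] [[c2 s2] [[c3 s3] [[c4 s4] _]]]]].
  rewrite !sum_Sn sum_O. cbv beta. unfold expi.
  rewrite c0 s0 c1 s1 c2 s2 c3 s3 c4 s4.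
  unfold RtoC. apply injective_projections; simpl; ring.
Qed.

Lemma sum5 (f : nat -> R) t :
  sum_n (fun j => (RtoC (f j) * expi (INR j * t))%C) 5 =
  (f 0%nat * Tch 0 (cos t) + f 1%nat * Tch 1 (cos t) + f 2%nat * Tch 2 (cos t)
     + f 3%nat * Tch 3 (cos t) + f 4%nat * Tch 4 (cos t) + f 5%nat * Tch 5 (cos t),
   sin t * (f 0%nat * Uch 0 (cos t) + f 1%nat * Uch 1 (cos t) + f 2%nat * Uch 2 (cos t)
     + f 3%nat * Uch 3 (cos t) + f 4%nat * Uch 4 (cos t) + f 5%nat * Uch 5 (cos t))).
Proof.
  destruct (trig_all t) as [[c0 s0] [[c1 s1] [[c2 s2] [[c3 s3] [[c4 s4] [c5 s5]]]]]].
  rewrite !sum_Sn sum_O. cbv beta. unfold expi.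
  rewrite c0 s0 c1 s1 c2 s2 c3 s3 c4 s4 c5 s5.
  unfold RtoC. apply injective_projections; simpl; ring.
Qed.

Definition RA g c := siems_a g 0 * Tch 0 c + siems_a g 1 * Tch 1 c + siems_a g 2 * Tch 2 c
  + siems_a g 3 * Tch 3 c + siems_a g 4 * Tch 4 c.
Definition QA g c := siems_a g 0 * Uch 0 c + siems_a g 1 * Uch 1 c + siems_a g 2 * Uch 2 c
  + siems_a g 3 * Uch 3 c + siems_a g 4 * Uch 4 c.
Definition RB g c := siems_b g 0 * Tch 0 c + siems_b g 1 * Tch 1 c + siems_b g 2 * Tch 2 c
  + siems_b g 3 * Tch 3 c + siems_b g 4 * Tch 4 c + siems_b g 5 * Tch 5 c.
Definition QB g c := siems_b g 0 * Uch 0 c + siems_b g 1 * Uch 1 c + siems_b g 2 * Uch 2 c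
  + siems_b g 3 * Uch 3 c + siems_b g 4 * Uch 4 c + siems_b g 5 * Uch 5 c.
Definition RC g c := siems_c g 0 * Tch 0 c + siems_c g 1 * Tch 1 c + siems_c g 2 * Tch 2 c
  + siems_c g 3 * Tch 3 c + siems_c g 4 * Tch 4 c.
Definition QC g c := siems_c g 0 * Uch 0 c + siems_c g 1 * Uch 1 c + siems_c g 2 * Uch 2 c
  + siems_c g 3 * Uch 3 c + siems_c g 4 * Uch 4 c.

Lemma A_eq g t : a_fun g t = (RA g (cos t), sin t * QA g (cos t)).
Proof. exact (sum4 (siems_a g) t). Qed.
Lemma B_eq g t : b_fun g t = (RB g (cos t), sin t * QB g (cos t)).
Proof. exact (sum5 (siems_b g) t). Qed.
Lemma C_eq g t : c_fun g t = (RC g (cos t), sin t * QC g (cos t)).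
Proof. exact (sum4 (siems_c g) t). Qed.

Definition PA g c := RA g c ^ 2 + (1 - c^2) * QA g c ^ 2.
Definition PC g c := RC g c ^ 2 + (1 - c^2) * QC g c ^ 2.
Definition PBA g c := RB g c * RA g c + (1 - c^2) * QB g c * QA g c.
Definition Nn g := 16*g^4 + 32*g^3 - 24*g^2 + 8*g - 1.
Definition Dd g := 16 * (15*g^4 - 15*g^2 + 10*g - 2).

Definition G1 (u y : R) : R :=
  ((718707231/781250) + (1422749696/234375)*u + (2446214144/140625)*u^2 + (264393728/9375)*u^3 + (10568576/375)*u^4 + (6633472/375)*u^5 + (169216/25)*u^6 + (7168/5)*u^7 + 128*u^8) * (1-y)^7
  + 7 * ((25000731841/49218750) + (5600096984/1640625)*u + (9749383576/984375)*u^2 + (1062050912/65625)*u^3 + (42611504/2625)*u^4 + (26745088/2625)*u^5 + (97152/25)*u^6 + (4096/5)*u^7 + (512/7)*u^8) * y * (1-y)^6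
  + 21 * ((5076322457/21093750) + (2735606992/1640625)*u + (14568572864/2953125)*u^2 + (535295456/65625)*u^3 + (7197584/875)*u^4 + (13548544/2625)*u^5 + (1028096/525)*u^6 + (2048/5)*u^7 + (256/7)*u^8) * y^2 * (1-y)^5
  + 35 * ((21529683841/246093750) + (754954712/1171875)*u + (9705863576/4921875)*u^2 + (155844416/46875)*u^3 + (44369504/13125)*u^4 + (3971584/1875)*u^5 + (696064/875)*u^6 + (4096/25)*u^7 + (512/35)*u^8) * y^3 * (1-y)^4
  + 35 * ((4398022429/246093750) + (1276222496/8203125)*u + (2507902144/4921875)*u^2 + (292017728/328125)*u^3 + (12025376/13125)*u^4 + (7478272/13125)*u^5 + (182016/875)*u^6 + (1024/25)*u^7 + (128/35)*u^8) * y^4 * (1-y)^3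
  + 21 * ((7329011/5906250) + (289192/21875)*u + (831976/23625)*u^2 + (29216/525)*u^3 + (5456/105)*u^4 + (2816/105)*u^5 + (128/21)*u^6) * y^5 * (1-y)^2
  + 7 * ((553069/78750) + (25296/875)*u + (20096/525)*u^2 + (864/35)*u^3 + (48/7)*u^4) * y^6 * (1-y)
  + ((697/150) + (72/5)*u + 8*u^2) * y^7.
Definition G2 (u y : R) : R :=
  ((820385385374233/19531250) + (1943759417199376/1953125)*u + (2931938312549328/390625)*u^2 + (2354518391299968/78125)*u^3 + (239641072407392/3125)*u^4 + (419285441953664/3125)*u^5 + (105237204370176/625)*u^6 + (19331541708288/125)*u^7 + (2610638791808/25)*u^8 + 51322617856*u^9 + 17862803456*u^10 + 4167966720*u^11 + 583372800*u^12 + 36864000*u^13) * (1-y)^3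
  + 3 * ((322081888625483/11718750) + (306700413346952/1171875)*u + (52882162042856/46875)*u^2 + (27225796670464/9375)*u^3 + (3097781340768/625)*u^4 + (11030521473664/1875)*u^5 + (1855722358912/375)*u^6 + (44175630848/15)*u^7 + (3637492352/3)*u^8 + 327915520*u^9 + 52213760*u^10 + 3686400*u^11) * y * (1-y)^2
  + 3 * ((844847256929/156250) + (623529260864/15625)*u + (406686989488/3125)*u^2 + (153631413856/625)*u^3 + (110947787696/375)*u^4 + (5870603136/25)*u^5 + (612781952/5)*u^6 + 40400384*u^7 + 7591040*u^8 + 614400*u^9) * y^2 * (1-y)
  + ((7594048053/6250) + (3961993704/625)*u + (1759391576/125)*u^2 + (85954656/5)*u^3 + 12424848*u^4 + 5284992*u^5 + 1215360*u^6 + 115200*u^7) * y^3.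
Definition G3 (u y : R) : R :=
  ((199772973/156250) + (1476638748/15625)*u + (2164378716/3125)*u^2 + (1449262672/625)*u^3 + (562495904/125)*u^4 + (137608832/25)*u^5 + (65070592/15)*u^6 + 2149888*u^7 + 612480*u^8 + 76800*u^9) * (1-y)^3
  + 3 * ((142246061/31250) + (322382924/9375)*u + (208534876/1875)*u^2 + (44928208/225)*u^3 + (9675664/45)*u^4 + (2083712/15)*u^5 + (149632/3)*u^6 + 7680*u^7) * y * (1-y)^2
  + 3 * ((3770687/3750) + (236204/45)*u + (164612/15)*u^2 + 11504*u^3 + (18160/3)*u^4 + 1280*u^5) * y^2 * (1-y)
  + ((12153/50) + (3556/5)*u + 708*u^2 + 240*u^3) * y^3.

Ltac pos := repeat (first [assumption | apply pow_le | apply Rplus_le_le_0_compat | apply Rmult_le_pos | lra]).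

Lemma G1_nn u y : 0 <= u -> 0 <= y <= 1 -> 0 <= G1 u y.
Proof. intros Hu Hy. assert (0 <= 1 - y) by lra. unfold G1. pos. Qed.
Lemma G2_nn u y : 0 <= u -> 0 <= y <= 1 -> 0 <= G2 u y.
Proof. intros Hu Hy. assert (0 <= 1 - y) by lra. unfold G2. pos. Qed.
Lemma G3_nn u y : 0 <= u -> 0 <= y <= 1 -> 0 <= G3 u y.
Proof. intros Hu Hy. assert (0 <= 1 - y) by lra. unfold G3. pos. Qed.

Lemma cert1 g c : PA g c - 1 = (1 - c) * G1 (g - 7/5) ((c+1)/2).
Proof. unfold PA, RA, QA, G1, Tch, Uch. rewrite !aE. unfold aS. cbv beta iota. field. Qed.
Lemma cert2 g c : (15 * Nn g)^2 * PA g c - Dd g ^ 2 * PC g c = (1 + c) * G2 (g - 7/5) ((c+1)/2).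
Proof. unfold PA, PC, RA, QA, RC, QC, Nn, Dd, G2, Tch, Uch. rewrite !aE. unfold aS. rewrite !cE. unfold cS. cbv beta iota. field. Qed.
Lemma cert3 g c : Dd g * PBA g c - 15 * (2*g-1)^4 * PA g c = (1 + c) * G3 (g - 7/5) ((c+1)/2).
Proof. unfold PA, PBA, RA, QA, RB, QB, Dd, G3, Tch, Uch. rewrite !aE. unfold aS. rewrite !bE. unfold bS. cbv beta iota. field. Qed.

Lemma Dd_pos g : 7/5 <= g -> 0 < Dd g.
Proof.
  intro hg. set (u := g - 7/5). assert (Hu : 0 <= u) by (unfold u; lra).
  assert (E : Dd g = 16 * ((5028/125) + ((3316/25)*u + (807/5)*u^2 + 84*u^3 + 15*u^4))) by (unfold Dd, u; field).
  rewrite E. assert (0 <= ((3316/25)*u + (807/5)*u^2 + 84*u^3 + 15*u^4)) by pos. lra.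
Qed.
Lemma Nn_pos g : 7/5 <= g -> 0 < Nn g.
Proof.
  intro hg. set (u := g - 7/5). assert (Hu : 0 <= u) by (unfold u; lra).
  assert (E : Nn g = (70271/625) + ((38072/125)*u + (7464/25)*u^2 + (608/5)*u^3 + 16*u^4)) by (unfold Nn, u; field).
  rewrite E. assert (0 <= ((38072/125)*u + (7464/25)*u^2 + (608/5)*u^3 + 16*u^4)) by pos. lra.
Qed.

Lemma div_le_helper a b c : 0 < c -> a <= b * c -> a / c <= b.
Proof.
  intros Hc H. assert (E : a / c - b = (a - b * c) / c) by (field; lra).
  assert (0 <= (b * c - a) / c).
  { unfold Rdiv. apply Rmult_le_pos; [lra | apply Rlt_le, Rinv_0_lt_compat; lra]. }
  assert (E2 : (b * c - a) / c = - ((a - b * c) / c)) by (field; lra). lra.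
Qed.

Lemma frac_le K D x y : 0 < D -> 0 < y -> 0 <= D*x - K*y -> K/D <= x/y.
Proof.
  intros HD Hy H. assert (E : x/y - K/D = (D*x - K*y)/(D*y)) by (field; lra).
  assert (0 <= (D*x - K*y)/(D*y)).
  { unfold Rdiv. apply Rmult_le_pos; [lra | apply Rlt_le, Rinv_0_lt_compat, Rmult_lt_0_compat; lra]. }
  lra.
Qed.

Lemma PA_ge1 g c : 7/5 <= g -> -1 <= c <= 1 -> 1 <= PA g c.
Proof.
  intros hg hc. pose proof (cert1 g c) as E.
  pose proof (G1_nn (g-7/5) ((c+1)/2) ltac:(lra) ltac:(lra)) as HG.
  assert (0 <= (1-c) * G1 (g - 7/5) ((c+1)/2)) by (apply Rmult_le_pos; lra). lra.
Qed.

Lemma PC_le g c : 7/5 <= g -> -1 <= c <= 1 -> PC g c <= (15 * Nn g / Dd g)^2 * PA g c.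
Proof.
  intros hg hc. pose proof (cert2 g c) as E. pose proof (Dd_pos g hg) as HD.
  pose proof (G2_nn (g-7/5) ((c+1)/2) ltac:(lra) ltac:(lra)) as HG.
  assert (0 <= (1+c) * G2 (g - 7/5) ((c+1)/2)) by (apply Rmult_le_pos; lra).
  assert (E2 : (15 * Nn g / Dd g)^2 * PA g c - PC g c
     = ((15 * Nn g)^2 * PA g c - Dd g ^ 2 * PC g c) / (Dd g ^ 2)) by (field; lra).
  assert (0 <= ((15 * Nn g)^2 * PA g c - Dd g ^ 2 * PC g c) / (Dd g ^ 2)).
  { unfold Rdiv. apply Rmult_le_pos; [lra | apply Rlt_le, Rinv_0_lt_compat, pow_lt; lra]. }
  lra.
Qed.

Lemma PBA_ge g c : 7/5 <= g -> -1 <= c <= 1 ->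
  15 * (2*g - 1)^4 / Dd g <= PBA g c / PA g c.
Proof.
  intros hg hc. pose proof (cert3 g c) as E. pose proof (Dd_pos g hg) as HD.
  pose proof (PA_ge1 g c hg hc) as HP.
  pose proof (G3_nn (g-7/5) ((c+1)/2) ltac:(lra) ltac:(lra)) as HG.
  assert (0 <= (1+c) * G3 (g - 7/5) ((c+1)/2)) by (apply Rmult_le_pos; lra).
  apply frac_le; lra.
Qed.

Lemma PA_m1 g : PA g (-1) = (Dd g / 15)^2.
Proof. unfold PA, RA, QA, Dd, Tch, Uch. rewrite !aE. unfold aS. cbv beta iota. field. Qed.
Lemma PC_m1 g : PC g (-1) = (Nn g)^2.
Proof. unfold PC, RC, QC, Nn, Tch, Uch. rewrite !cE. unfold cS. cbv beta iota. field. Qed.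
Lemma PBA_m1 g : PBA g (-1) = (2*g-1)^4 * (Dd g / 15).
Proof. unfold PBA, RA, QA, RB, QB, Dd, Tch, Uch. rewrite !aE !bE. unfold aS, bS. cbv beta iota. field. Qed.
Lemma PA_1 g : PA g 1 = 1.
Proof. pose proof (cert1 g 1) as E. replace (1 - 1) with 0 in E by ring. rewrite Rmult_0_l in E. lra. Qed.

Lemma modA g t : Cmod (a_fun g t) = sqrt (PA g (cos t)).
Proof. rewrite A_eq. unfold Cmod. cbn [fst snd]. f_equal. unfold PA. rewrite Rpow_mult_distr sin2'. ring. Qed.
Lemma modC g t : Cmod (c_fun g t) = sqrt (PC g (cos t)).
Proof. rewrite C_eq. unfold Cmod. cbn [fst snd]. f_equal. unfold PC. rewrite Rpow_mult_distr sin2'. ring. Qed.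
Lemma reBA g t : Re (b_fun g t / a_fun g t)%C = PBA g (cos t) / PA g (cos t).
Proof.
  rewrite A_eq B_eq. unfold Re, Cdiv, Cmult, Cinv. cbn [fst snd].
  assert (E : RA g (cos t) ^ 2 + (sin t * QA g (cos t)) ^ 2 = PA g (cos t))
    by (unfold PA; rewrite Rpow_mult_distr sin2'; ring).
  rewrite E. unfold PBA. rewrite -sin2'. unfold Rdiv. ring.
Qed.

Theorem mainTheorem12 (g : R) (hg : 7/5 <= g) :
  (forall t, 0 <= t < 2 * PI -> a_fun g t <> 0%C) /\
  is_max_on_circle (fun t => Cmod (/ a_fun g t)%C) 1 /\
  is_max_on_circle (fun t => Cmod (c_fun g t / a_fun g t)%C)
    (15 * (16*g^4 + 32*g^3 - 24*g^2 + 8*g - 1)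
       / (16 * (15*g^4 - 15*g^2 + 10*g - 2))) /\
  is_min_on_circle (fun t => Re (b_fun g t / a_fun g t)%C)
    (15 * (2*g - 1)^4 / (16 * (15*g^4 - 15*g^2 + 10*g - 2))) /\
  (15 * (2*g - 1)^4 / (16 * (15*g^4 - 15*g^2 + 10*g - 2)))
    / (15 * (16*g^4 + 32*g^3 - 24*g^2 + 8*g - 1)
         / (16 * (15*g^4 - 15*g^2 + 10*g - 2)))
  = (2*g - 1)^4 / (16*g^4 + 32*g^3 - 24*g^2 + 8*g - 1).
Proof.
  pose proof (Dd_pos g hg) as HD. pose proof (Nn_pos g hg) as HN.
  pose proof PI_RGT_0 as HPI.
  assert (HPA : forall t, 1 <= PA g (cos t)) by (intro t; apply PA_ge1; [lra | apply COS_bound]).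
  assert (Hsq : forall t, 1 <= sqrt (PA g (cos t))).
  { intro t. rewrite -sqrt_1. apply sqrt_le_1_alt. apply HPA. }
  assert (Ane : forall t, a_fun g t <> 0%C).
  { intros t HA. pose proof (modA g t) as H. rewrite HA Cmod_0 in H. pose proof (Hsq t). lra. }
  change (16 * (15*g^4 - 15*g^2 + 10*g - 2)) with (Dd g).
  change (16*g^4 + 32*g^3 - 24*g^2 + 8*g - 1) with (Nn g).
  split; [intros t _; apply Ane|].
  split.
  { split.
    - exists 0. split; [lra|]. rewrite Cmod_inv; [|apply Ane]. rewrite modA cos_0 PA_1 sqrt_1. apply Rinv_1.
    - intros t _. rewrite Cmod_inv; [|apply Ane]. rewrite modA. pose proof (Hsq t).
      apply Rle_trans with (/ 1); [apply Rinv_le_contravar; lra | rewrite Rinv_1; lra]. }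
  split.
  { split.
    - exists PI. split; [lra|]. rewrite Cmod_div; [|apply Ane]. rewrite modA modC cos_PI PA_m1 PC_m1.
      assert (0 <= Dd g / 15) by (unfold Rdiv; apply Rmult_le_pos; lra).
      rewrite !sqrt_pow2; try lra. field. lra.
    - intros t _. rewrite Cmod_div; [|apply Ane]. rewrite modA modC.
      pose proof (Hsq t). pose proof (PC_le g (cos t) hg (COS_bound t)) as HC.
      apply div_le_helper; [lra|].
      assert (HM : 0 <= 15 * Nn g / Dd g) by (unfold Rdiv; apply Rmult_le_pos; [lra | apply Rlt_le, Rinv_0_lt_compat; lra]).
      rewrite -(sqrt_pow2 (15 * Nn g / Dd g) HM) -sqrt_mult_alt; [|apply pow2_ge_0].
      apply sqrt_le_1_alt. exact HC. }
  split.
  { split.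
    - exists PI. split; [lra|]. rewrite reBA cos_PI PBA_m1 PA_m1. field. lra.
    - intros t _. rewrite reBA. apply PBA_ge; [lra | apply COS_bound]. }
  field. split; lra.
Qed.
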